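(* Consider the objective $$\Phi(w,u)=\frac1n\sum_{i=1}^n\Big[-L\big(y_i,f(w,u)(x^i)\big)+\sum_{r=1}^K f_r(w,u)(x^i)\Big]+\epsilon\Big(\sum_{r,l}w_{r,l}+\sum_{l,m}u_{lm}\Big),\quad\epsilon>0,$$ for a family of functions $f_r(w,u)(x)$, $r\in[K]$, that are twice continuously differentiable in $(w,u)$ on a neighbourhood of $B_{++}$ and whose first and second partial derivatives in the entries of $(w,u)$ are nonnegative there. Suppose there exist constants $C_w,C_u,M_{w,w},M_{w,u},M_{u,w},M_{u,u}>0$ such that for every $x\in\{x^1,\dots,x^n\}$, every $(w,u)\in B_{++}$, all $r,s\in[K]$, $t,b'\in[n_1]$ (indices for $w$) and $a\in[n_1]$, $b\in[d]$, $a'\in[n_1]$, $b''\in[d]$ (indices for $u$): $$\sum_{t}w_{s,t}\frac{\partial f_r(x)}{\partial w_{s,t}}\le C_w,\qquad \sum_{a,b}u_{ab}\frac{\partial f_r(x)}{\partial u_{ab}}\le C_u,$$ $$\sum_t w_{s,t}\frac{\partial^2 f_r(x)}{\partial w_{s,t}\partial w_{q,b'}}\le M_{w,w}\frac{\partial f_r(x)}{\partial w_{q,b'}},\qquad \sum_{a,b}u_{ab}\frac{\partial^2 f_r(x)}{\partial u_{ab}\partial w_{q,b'}}\le M_{w,u}\frac{\partial f_r(x)}{\partial w_{q,b'}},$$ $$\sum_t w_{s,t}\frac{\partial^2 f_r(x)}{\partial w_{s,t}\partial u_{a'b''}}\le M_{u,w}\frac{\partial f_r(x)}{\partial u_{a'b''}},\qquad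 \sum_{a,b}u_{ab}\frac{\partial^2 f_r(x)}{\partial u_{ab}\partial u_{a'b''}}\le M_{u,u}\frac{\partial f_r(x)}{\partial u_{a'b''}}$$ (for all $q\in[K]$). Then $F=G^\Phi$ is well defined on $B_{++}$ and $F$ and the matrix $$A=2\,\mathrm{diag}(p_w'-1,\dots,p_w'-1,p_u'-1)\begin{pmatrix}(2C_w+M_{w,w})\mathbf{1}\mathbf{1}^T & (2C_u+M_{w,u})\mathbf{1}\\ (2C_w+M_{u,w})\mathbf{1}^T & 2C_u+M_{u,u}\end{pmatrix}\in\mathbb{R}^{(K+1)\times(K+1)}$$ (with $\mathbf{1}\in\mathbb{R}^K$ the all-ones vector) satisfy, for all $i,k\in[K]$, $j,a\in[n_1]$, $b\in[d]$, $(w,u)\in B_{++}$: $$\langle|\nabla_{w_k}F_{w_{i,j}}|,w_k\rangle\le A_{i,k}F_{w_{i,j}},\ \langle|\nabla_u F_{w_{i,j}}|,u\rangle\le A_{i,K+1}F_{w_{i,j}},\ \langle|\nabla_{w_k}F_{u_{ab}}|,w_k\rangle\le A_{K+1,k}F_{u_{ab}},\ \langle|\nabla_u F_{u_{ab}}|,u\rangle\le A_{K+1,K+1}F_{u_{ab}}.$$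
   Context: Data $(x^i,y_i)\in\mathbb{R}^d_+\times[K]$, $i\in[n]$. $w\in\mathbb{R}^{K\times n_1}$ with rows $w_1,\dots,w_K$, $u\in\mathbb{R}^{n_1\times d}$. Loss $L(y,f(x))=-f_y(x)+\log\sum_{j=1}^K e^{f_j(x)}$. $V_{++}=\mathbb{R}^{K\times n_1}_{++}\times\mathbb{R}^{n_1\times d}_{++}$; given $p_w,p_u\in(1,\infty)$, $\rho_w,\rho_u>0$, $B_{++}=\{(w,u)\in V_{++}:\|u\|_{p_u}\le\rho_u,\ \|w_i\|_{p_w}\le\rho_w\ \forall i\}$ (entrywise norms). For $p\in(1,\infty)$, $p'=p/(p-1)$, $\psi_p(z)=\operatorname{sign}(z)|z|^{p-1}$ componentwise; $$G^{\Phi}(w,u)=\Big(\tfrac{\rho_w\psi_{p_w'}(\nabla_{w_1}\Phi)}{\|\psi_{p_w'}(\nabla_{w_1}\Phi)\|_{p_w}},\dots,\tfrac{\rho_w\psi_{p_w'}(\nabla_{w_K}\Phi)}{\|\psi_{p_w'}(\nabla_{w_K}\Phi)\|_{p_w}},\tfrac{\rho_u\psi_{p_u'}(\nabla_u\Phi)}{\|\psi_{p_u'}(\nabla_u\Phi)\|_{p_u}}\Big)(w,u),$$ whose components are denoted $F_{w_{i,j}}$, $F_{u_{ab}}$. $|\cdot|$ is the entrywise absolute value, $\langle\cdot,\cdot\rangle$ the Frobenius inner product, all quantities evaluated at $(w,u)$. *)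

(* Defs.v *)
From Stdlib Require Import Reals ClassicalEpsilon.
From mathcomp Require Import all_boot.
Set Implicit Arguments.
Unset Strict Implicit.
Unset Printing Implicit Defensive.
Local Open Scope R_scope.

(* A coordinate is either w_{i,j} (i < K, j < n1) or u_{a,b} (a < n1, b < d).
   Indices are 0-based: [K] = {0,...,K-1}. *)
Definition coord (K n1 d : nat) : Type := (('I_K * 'I_n1) + ('I_n1 * 'I_d))%type.
Definition CW {K n1 d : nat} (i : 'I_K) (j : 'I_n1) : coord K n1 d := inl (i, j).
Definition CU {K n1 d : nat} (a : 'I_n1) (b : 'I_d) : coord K n1 d := inr (a, b).

Definition param (K n1 d : nat) : Type := coord K n1 d -> R.

Definition shift {K n1 d : nat} (p : param K n1 d) (c : coord K n1 d) (h : R)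
  : param K n1 d := fun c' => if c' == c then p c' + h else p c'.

Definition has_pd {K n1 d : nat} (g : param K n1 d -> R) (c : coord K n1 d)
  (p : param K n1 d) : Prop :=
  exists l, derivable_pt_lim (fun h => g (shift p c h)) 0 l.

(* the partial derivative dg/dc at p (meaningful when has_pd g c p) *)
Definition pd {K n1 d : nat} (g : param K n1 d -> R) (c : coord K n1 d)
  (p : param K n1 d) : R :=
  epsilon (inhabits 0) (fun l => derivable_pt_lim (fun h => g (shift p c h)) 0 l).

Definition near {K n1 d : nat} (p q : param K n1 d) (delta : R) : Prop :=
  forall c, Rabs (q c - p c) < delta.

Definition is_open {K n1 d : nat} (U : param K n1 d -> Prop) : Prop :=
  forall p, U p -> exists delta, 0 < delta /\ forall q, near p q delta -> U q.

Definition cont_at {K n1 d : nat} (g : param K n1 d -> R) (p : param K n1 d) : Prop :=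
  forall e, 0 < e -> exists delta, 0 < delta /\
    forall q, near p q delta -> Rabs (g q - g p) < e.

Definition C2_on {K n1 d : nat} (U : param K n1 d -> Prop) (g : param K n1 d -> R) : Prop :=
  forall p, U p ->
    cont_at g p /\
    (forall c, has_pd g c p /\ cont_at (pd g c) p) /\
    (forall c1 c2, has_pd (pd g c1) c2 p /\ cont_at (pd (pd g c1) c2) p).

(* x^y for x >= 0 (with 0^y = 0, used only for y > 0) *)
Definition rpow (x y : R) : R := if Rlt_dec 0 x then Rpower x y else 0.

Definition sgn (z : R) : R :=
  if Rlt_dec 0 z then 1 else if Rlt_dec z 0 then -1 else 0.

Definition conj_exp (p : R) : R := p / (p - 1).

Definition psi (p z : R) : R := sgn z * rpow (Rabs z) (p - 1).

Definition norm_row {K n1 d : nat} (pp : R) (v : param K n1 d) (i : 'I_K) : R :=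
  rpow (\big[Rplus/0]_(j < n1) rpow (Rabs (v (CW i j))) pp) (/ pp).
Definition norm_u {K n1 d : nat} (pp : R) (v : param K n1 d) : R :=
  rpow (\big[Rplus/0]_(a < n1) \big[Rplus/0]_(b < d) rpow (Rabs (v (CU a b))) pp) (/ pp).

Definition Vpp {K n1 d : nat} (p : param K n1 d) : Prop := forall c, 0 < p c.
Definition Bpp {K n1 d : nat} (pw pu rw ru : R) (p : param K n1 d) : Prop :=
  Vpp p /\ norm_u pu p <= ru /\ (forall i : 'I_K, norm_row pw p i <= rw).

Definition CEloss {K : nat} (y : 'I_K) (v : 'I_K -> R) : R :=
  - v y + ln (\big[Rplus/0]_(j < K) exp (v j)).

Definition Phi {K n1 d n : nat} (f : 'I_K -> ('I_d -> R) -> param K n1 d -> R)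
  (x : 'I_n -> 'I_d -> R) (y : 'I_n -> 'I_K) (eps : R) (p : param K n1 d) : R :=
  / INR n * \big[Rplus/0]_(i < n)
      (- CEloss (y i) (fun r => f r (x i) p) + \big[Rplus/0]_(r < K) f r (x i) p)
  + eps * (\big[Rplus/0]_(r < K) \big[Rplus/0]_(l < n1) p (CW r l)
           + \big[Rplus/0]_(l < n1) \big[Rplus/0]_(m < d) p (CU l m)).

Definition psi_grad {K n1 d : nat} (Ph : param K n1 d -> R) (pp : R) (p : param K n1 d)
  : param K n1 d := fun c => psi (conj_exp pp) (pd Ph c p).

Definition GPhi {K n1 d : nat} (Ph : param K n1 d -> R) (pw pu rw ru : R)
  (c : coord K n1 d) (p : param K n1 d) : R :=
  match c with
  | inl (i, j) => rw * psi (conj_exp pw) (pd Ph (CW i j) p)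
                    / norm_row pw (psi_grad Ph pw p) i
  | inr (a, b) => ru * psi (conj_exp pu) (pd Ph (CU a b) p)
                    / norm_u pu (psi_grad Ph pu p)
  end.

(* the (K+1)x(K+1) matrix A, 0-based indices 0..K; index K is the last
   row/column (K+1 in the paper).
   A = 2 diag(pw'-1,...,pw'-1,pu'-1) * Blk. *)
Definition Ablk (K : nat) (Cw Cu Mww Mwu Muw Muu : R) (i k : nat) : R :=
  if (i < K)%N then (if (k < K)%N then 2 * Cw + Mww else 2 * Cu + Mwu)
  else (if (k < K)%N then 2 * Cw + Muw else 2 * Cu + Muu).
Definition Adiag (K : nat) (pw pu : R) (i : nat) : R :=
  if (i < K)%N then conj_exp pw - 1 else conj_exp pu - 1.
Definition Amat (K : nat) (pw pu Cw Cu Mww Mwu Muw Muu : R) (i k : nat) : R :=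
  2 * (Adiag K pw pu i * Ablk K Cw Cu Mww Mwu Muw Muu i k).

Definition ip_w {K n1 d : nat} (g : param K n1 d -> R) (k : 'I_K) (p : param K n1 d) : R :=
  \big[Rplus/0]_(t < n1) (Rabs (pd g (CW k t) p) * p (CW k t)).
Definition ip_u {K n1 d : nat} (g : param K n1 d -> R) (p : param K n1 d) : R :=
  \big[Rplus/0]_(a < n1) \big[Rplus/0]_(b < d) (Rabs (pd g (CU a b) p) * p (CU a b)).

(* Main.v *)
Require Import Defs.
From Stdlib Require Import Reals Lra ClassicalEpsilon FunctionalExtensionality.
From HB Require Import structures.
From mathcomp Require Import all_boot.
Local Open Scope R_scope.

Lemma RplusA : associative Rplus. Proof. move=> *; ring. Qed.
Lemma RplusC : commutative Rplus. Proof. move=> *; ring. Qed.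
Lemma Rplus0l : left_id 0 Rplus. Proof. move=> *; ring. Qed.
HB.instance Definition _ := Monoid.isComLaw.Build R 0 Rplus RplusA RplusC Rplus0l.

Lemma sumR_le (I : Type) (r : seq I) (P : pred I) (F G : I -> R) :
  (forall i, P i -> F i <= G i) ->
  \big[Rplus/0]_(i <- r | P i) F i <= \big[Rplus/0]_(i <- r | P i) G i.
Proof. move=> H; apply: (big_ind2 (fun a b => a <= b)); [lra| |by []].
move=> *; lra. Qed.

Lemma sumR_ge0 (I : Type) (r : seq I) (P : pred I) (F : I -> R) :
  (forall i, P i -> 0 <= F i) -> 0 <= \big[Rplus/0]_(i <- r | P i) F i.
Proof. move=> H; apply: (big_ind (fun a => 0 <= a)); [lra| |by []].
move=> *; lra. Qed.

Lemma sumR_mull (I : Type) (r : seq I) (P : pred I) (F : I -> R) c :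
  \big[Rplus/0]_(i <- r | P i) (c * F i) = c * \big[Rplus/0]_(i <- r | P i) F i.
Proof. apply: (big_rec2 (fun a b => a = c * b)); first ring.
by move=> i y1 y2 _ ->; ring. Qed.

Lemma sumR_plus (I : Type) (r : seq I) (P : pred I) (F G : I -> R) :
  \big[Rplus/0]_(i <- r | P i) (F i + G i) =
  \big[Rplus/0]_(i <- r | P i) F i + \big[Rplus/0]_(i <- r | P i) G i.
Proof. exact: big_split. Qed.

Lemma sumR_opp (I : Type) (r : seq I) (P : pred I) (F : I -> R) :
  \big[Rplus/0]_(i <- r | P i) (- F i) = - \big[Rplus/0]_(i <- r | P i) F i.
Proof. apply: (big_rec2 (fun a b => a = - b)); first ring.
by move=> i y1 y2 _ ->; ring. Qed.

Lemma sumR_abs (I : Type) (r : seq I) (P : pred I) (F : I -> R) :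
  Rabs (\big[Rplus/0]_(i <- r | P i) F i) <= \big[Rplus/0]_(i <- r | P i) Rabs (F i).
Proof. apply: (big_rec2 (fun a b => Rabs a <= b)).
 rewrite Rabs_R0; lra.
move=> i y1 y2 _ H. apply: Rle_trans (Rabs_triang _ _) _. lra. Qed.

Lemma sumR_ge_term (I : finType) (F : I -> R) (j : I) :
  (forall i, 0 <= F i) -> F j <= \big[Rplus/0]_(i : I) F i.
Proof. move=> H; rewrite (bigD1 j) //=.
have : 0 <= \big[Rplus/0]_(i | i != j) F i by apply: sumR_ge0.
have := H j. lra. Qed.

Lemma dpl_eq f x l l' : l = l' -> derivable_pt_lim f x l -> derivable_pt_lim f x l'.
Proof. by move=> ->. Qed.

Lemma dpl_const (a x : R) : derivable_pt_lim (fun _ => a) x 0.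
Proof. exact: derivable_pt_lim_const. Qed.

Lemma dpl_id x : derivable_pt_lim (fun h => h) x 1.
Proof. exact: derivable_pt_lim_id. Qed.

Lemma dpl_plus f g x l1 l2 : derivable_pt_lim f x l1 -> derivable_pt_lim g x l2 ->
  derivable_pt_lim (fun h => f h + g h) x (l1 + l2).
Proof. exact: derivable_pt_lim_plus. Qed.

Lemma dpl_minus f g x l1 l2 : derivable_pt_lim f x l1 -> derivable_pt_lim g x l2 ->
  derivable_pt_lim (fun h => f h - g h) x (l1 - l2).
Proof. exact: derivable_pt_lim_minus. Qed.

Lemma dpl_opp f x l1 : derivable_pt_lim f x l1 ->
  derivable_pt_lim (fun h => - f h) x (- l1).
Proof. exact: derivable_pt_lim_opp. Qed.

Lemma dpl_mult f g x l1 l2 : derivable_pt_lim f x l1 -> derivable_pt_lim g x l2 ->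
  derivable_pt_lim (fun h => f h * g h) x (l1 * g x + f x * l2).
Proof. exact: derivable_pt_lim_mult. Qed.

Lemma dpl_scal c f x l1 : derivable_pt_lim f x l1 ->
  derivable_pt_lim (fun h => c * f h) x (c * l1).
Proof. exact: derivable_pt_lim_scal. Qed.

Lemma dpl_div f g x l1 l2 : derivable_pt_lim f x l1 -> derivable_pt_lim g x l2 ->
  g x <> 0 ->
  derivable_pt_lim (fun h => f h / g h) x ((l1 * g x - l2 * f x) / (g x * g x)).
Proof. move=> *; have := derivable_pt_lim_div f g x l1 l2; rewrite /Rsqr; auto. Qed.

Lemma dpl_exp f x l : derivable_pt_lim f x l ->
  derivable_pt_lim (fun h => exp (f h)) x (exp (f x) * l).
Proof. move=> H; exact: (derivable_pt_lim_comp f exp x l _ H (derivable_pt_lim_exp _)). Qed.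

Lemma dpl_ln f x l : derivable_pt_lim f x l -> 0 < f x ->
  derivable_pt_lim (fun h => ln (f h)) x (/ f x * l).
Proof. move=> H P; exact: (derivable_pt_lim_comp f ln x l _ H (derivable_pt_lim_ln _ P)). Qed.

Lemma dpl_pow f x l a : derivable_pt_lim f x l -> 0 < f x ->
  derivable_pt_lim (fun h => Rpower (f h) a) x (a * Rpower (f x) (a - 1) * l).
Proof. move=> H P; exact: (derivable_pt_lim_comp f (Rpower^~ a) x l _ H (derivable_pt_lim_power _ _ P)). Qed.

Lemma dpl_ext f g x l : (forall h, f h = g h) -> derivable_pt_lim f x l ->
  derivable_pt_lim g x l.
Proof. move=> E H e He; case: (H e He) => del Hd; exists del => h h0 hd.
by rewrite -!E; apply: Hd. Qed.

Lemma dpl_sum (I : Type) (r : seq I) (P : pred I) (F : I -> R -> R) (l : I -> R) x :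
  (forall i, P i -> derivable_pt_lim (F i) x (l i)) ->
  derivable_pt_lim (fun h => \big[Rplus/0]_(i <- r | P i) F i h) x
                   (\big[Rplus/0]_(i <- r | P i) l i).
Proof. move=> H; elim: r => [|a r IH].
  rewrite big_nil; apply: (dpl_ext (fun _ => 0)); last exact: dpl_const.
  by move=> h; rewrite big_nil.
rewrite big_cons; case Pa: (P a).
  apply: (dpl_ext (fun h => F a h + \big[Rplus/0]_(i <- r | P i) F i h)).
    by move=> h; rewrite big_cons Pa.
  by apply: dpl_plus => //; apply: H.
apply: (dpl_ext _ _ _ _ _ IH). by move=> h; rewrite big_cons Pa.
Qed.

Lemma dpl_local f g l : (exists del, 0 < del /\ forall h, Rabs h < del -> f h = g h) ->
  derivable_pt_lim f 0 l -> derivable_pt_lim g 0 l.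
Proof. case=> del [Hdel E] H e He; case: (H e He) => d1 Hd1.
have P1 : 0 < Rmin d1 del by apply: Rmin_pos => //; exact: cond_pos d1.
exists (mkposreal _ P1) => h h0 /= hd.
have hd1 : Rabs h < d1 by apply: Rlt_le_trans hd (Rmin_l _ _).
have hdel : Rabs h < del by apply: Rlt_le_trans hd (Rmin_r _ _).
rewrite -E; last by rewrite Rplus_0_l.
rewrite -(E 0); last by rewrite Rabs_R0.
exact: Hd1.
Qed.

Lemma pd_spec K n1 d (g : param K n1 d -> R) c p :
  has_pd g c p -> derivable_pt_lim (fun h => g (shift p c h)) 0 (pd g c p).
Proof. move=> H; rewrite /pd; exact: (epsilon_spec (inhabits 0) _ H). Qed.

Lemma pd_unique K n1 d (g : param K n1 d -> R) c p l :
  derivable_pt_lim (fun h => g (shift p c h)) 0 l -> pd g c p = l.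
Proof. move=> H; apply: (uniqueness_limite _ 0); last exact: H.
by apply: pd_spec; exists l. Qed.

Set Implicit Arguments.
Unset Strict Implicit.

Definition kap {K n1 d : nat} (c : coord K n1 d) : R :=
  \big[Rplus/0]_(r < K) \big[Rplus/0]_(l < n1) (if CW r l == c then 1 else 0)
  + \big[Rplus/0]_(l < n1) \big[Rplus/0]_(m < d) (if CU l m == c then 1 else 0).

Definition Eg {K n1 d n : nat} (f : 'I_K -> ('I_d -> R) -> param K n1 d -> R)
  (x : 'I_n -> 'I_d -> R) (y : 'I_n -> 'I_K) (eps : R) (c : coord K n1 d)
  (q : param K n1 d) : R :=
  / INR n * \big[Rplus/0]_(i < n)
     ( pd (f (y i) (x i)) c q
       - (\big[Rplus/0]_(j < K) (exp (f j (x i) q) * pd (f j (x i)) c q))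
          / (\big[Rplus/0]_(j < K) exp (f j (x i) q))
       + \big[Rplus/0]_(r < K) pd (f r (x i)) c q)
  + eps * kap c.

Lemma sum_exp_pos K (z : 'I_K -> R) : (0 < K)%N -> 0 < \big[Rplus/0]_(j < K) exp (z j).
Proof. move=> HK. have := sumR_ge_term ('I_K) (fun j => exp (z j)) (Ordinal HK).
have := exp_pos (z (Ordinal HK)). move=> H1 H2.
have : 0 <= exp (z (Ordinal HK)) <= \big[Rplus/0]_(j < K) exp (z j).
  split; [lra| apply: H2 => i; have := exp_pos (z i); lra].
lra. Qed.

Lemma dpl_coord K n1 d (q : param K n1 d) c c0 :
  derivable_pt_lim (fun h => shift q c h c0) 0 (if c0 == c then 1 else 0).
Proof. rewrite /shift; case: (c0 == c).
 apply: (dpl_eq _ _ (0 + 1)); first ring. apply: dpl_plus; [exact: dpl_const|exact: dpl_id].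
exact: dpl_const. Qed.

Lemma shift0 K n1 d (q : param K n1 d) c : shift q c 0 = q.
Proof. apply: functional_extensionality => c0; rewrite /shift; case: (c0 == c) => //; ring. Qed.

Lemma grad_Phi K n1 d n (f : 'I_K -> ('I_d -> R) -> param K n1 d -> R)
  (x : 'I_n -> 'I_d -> R) (y : 'I_n -> 'I_K) eps c q :
  (0 < K)%N ->
  (forall r i, has_pd (f r (x i)) c q) ->
  derivable_pt_lim (fun h => Phi f x y eps (shift q c h)) 0 (Eg f x y eps c q).
Proof.
move=> HK Hpd. rewrite /Phi /Eg /CEloss.
apply: dpl_plus; last first.
  apply: dpl_scal. rewrite /kap; apply: dpl_plus; apply: dpl_sum => r _;
  apply: dpl_sum => l _; exact: dpl_coord.
apply: dpl_scal; apply: dpl_sum => i _.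
set E := \big[Rplus/0]_(j < K) exp (f j (x i) q).
have HE : 0 < E by apply: sum_exp_pos.
apply: (dpl_eq _ _ (- (- pd (f (y i) (x i)) c q + / E * \big[Rplus/0]_(j < K) (exp (f j (x i) q) * pd (f j (x i)) c q)) + \big[Rplus/0]_(r < K) pd (f r (x i)) c q)).
  rewrite /Rdiv; ring.
apply: dpl_plus; last by apply: dpl_sum => r _; apply: pd_spec.
apply: dpl_opp; apply: dpl_plus.
  apply: dpl_opp; exact: pd_spec.
eapply dpl_eq; last first.
  eapply dpl_ln; last by rewrite shift0.
  apply: dpl_sum => j _. apply: dpl_exp; exact: pd_spec.
cbv beta; rewrite shift0; congr (_ * _); apply: eq_bigr => j _; by rewrite shift0.
Qed.

Lemma ind01 (b : bool) : 0 <= (if b then 1 else 0).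
Proof. case: b; lra. Qed.

Lemma kap_ge1 K n1 d (c : coord K n1 d) : 1 <= kap c.
Proof.
rewrite /kap.
have G0 : forall (T : finType) (F : T -> R), (forall t, 0 <= F t) -> 0 <= \big[Rplus/0]_(t : T) F t.
  by move=> T F H; apply: sumR_ge0.
set S1 := \big[Rplus/0]_(r < K) _. set S2 := \big[Rplus/0]_(l < n1) _.
have P1 : 0 <= S1 by apply: (G0) => r; apply: (G0) => l; exact: ind01.
have P2 : 0 <= S2 by apply: (G0) => r; apply: (G0) => l; exact: ind01.
case: c @S1 @S2 P1 P2 => [[i0 j0]|[a0 b0]] S1 S2 P1 P2.
  have H1 : (if CW i0 j0 == (inl (i0, j0) : coord K n1 d) then 1 else 0) <= \big[Rplus/0]_(l < n1) (if CW i0 l == (inl (i0, j0) : coord K n1 d) then 1 else (0:R)).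
    apply: (sumR_ge_term ('I_n1) (fun l => if CW i0 l == (inl (i0, j0) : coord K n1 d) then 1 else (0:R))) => l; exact: ind01.
  have H2 : \big[Rplus/0]_(l < n1) (if CW i0 l == (inl (i0, j0) : coord K n1 d) then 1 else (0:R)) <= S1.
    apply: (sumR_ge_term ('I_K) (fun r => \big[Rplus/0]_(l < n1) (if CW r l == (inl (i0, j0) : coord K n1 d) then 1 else (0:R)))) => r.
    apply: (G0) => l; exact: ind01.
  move: H1; rewrite /= ?eqxx /=; move=> H; apply: Rle_trans H _; apply: Rle_trans H2 _; lra.
have H1 : (if CU a0 b0 == (inr (a0, b0) : coord K n1 d) then 1 else 0) <= \big[Rplus/0]_(m < d) (if CU a0 m == (inr (a0, b0) : coord K n1 d) then 1 else (0:R)).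
  apply: (sumR_ge_term ('I_d) (fun m => if CU a0 m == (inr (a0, b0) : coord K n1 d) then 1 else (0:R))) => l; exact: ind01.
have H2 : \big[Rplus/0]_(m < d) (if CU a0 m == (inr (a0, b0) : coord K n1 d) then 1 else (0:R)) <= S2.
  apply: (sumR_ge_term ('I_n1) (fun l => \big[Rplus/0]_(m < d) (if CU l m == (inr (a0, b0) : coord K n1 d) then 1 else (0:R)))) => r.
  apply: (G0) => l; exact: ind01.
move: H1; rewrite /= ?eqxx /=; move=> H; apply: Rle_trans H _; apply: Rle_trans H2 _; lra.
Qed.

Lemma sample_nonneg K (e dd : 'I_K -> R) : (0 < K)%N ->
  (forall j, 0 < e j) -> (forall j, 0 <= dd j) ->
  (\big[Rplus/0]_(j < K) (e j * dd j)) / (\big[Rplus/0]_(j < K) e j)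
    <= \big[Rplus/0]_(j < K) dd j.
Proof.
move=> HK He Hd.
set E := \big[Rplus/0]_(j < K) e j.
have HE : 0 < E.
  apply: Rlt_le_trans (He (Ordinal HK)) _.
  apply: sumR_ge_term => j; exact: Rlt_le.
apply: (Rmult_le_reg_r E) => //. rewrite /Rdiv Rmult_assoc Rinv_l; last lra.
rewrite Rmult_1_r Rmult_comm -sumR_mull. apply: sumR_le => j _.
apply: Rmult_le_compat_r => //. apply: sumR_ge_term => i; exact: Rlt_le.
Qed.

Lemma Eg_ge K n1 d n (f : 'I_K -> ('I_d -> R) -> param K n1 d -> R)
  (x : 'I_n -> 'I_d -> R) (y : 'I_n -> 'I_K) eps c q :
  (0 < n)%N -> (0 < K)%N -> 0 < eps ->
  (forall r i, 0 <= pd (f r (x i)) c q) -> eps <= Eg f x y eps c q.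
Proof.
move=> Hn HK He Hd. rewrite /Eg.
have Hk := kap_ge1 c.
have Hn' : 0 < / INR n by apply: Rinv_0_lt_compat; apply: lt_0_INR; apply/ltP.
have HS : 0 <= \big[Rplus/0]_(i < n)
     ( pd (f (y i) (x i)) c q
       - (\big[Rplus/0]_(j < K) (exp (f j (x i) q) * pd (f j (x i)) c q))
          / (\big[Rplus/0]_(j < K) exp (f j (x i) q))
       + \big[Rplus/0]_(r < K) pd (f r (x i)) c q).
  apply: sumR_ge0 => i _.
  have := @sample_nonneg K (fun j => exp (f j (x i) q)) (fun j => pd (f j (x i)) c q) HK
    (fun j => exp_pos _) (fun j => Hd j i).
  have := Hd (y i) i. lra.
have : 0 <= / INR n * \big[Rplus/0]_(i < n)
     ( pd (f (y i) (x i)) c q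
       - (\big[Rplus/0]_(j < K) (exp (f j (x i) q) * pd (f j (x i)) c q))
          / (\big[Rplus/0]_(j < K) exp (f j (x i) q))
       + \big[Rplus/0]_(r < K) pd (f r (x i)) c q) by apply: Rmult_le_pos; lra.
nra.
Qed.

Definition DEg {K n1 d n : nat} (f : 'I_K -> ('I_d -> R) -> param K n1 d -> R)
  (x : 'I_n -> 'I_d -> R) (y : 'I_n -> 'I_K) (c' c : coord K n1 d)
  (q : param K n1 d) : R :=
  / INR n * \big[Rplus/0]_(i < n)
     ( pd (pd (f (y i) (x i)) c') c q
       - ((\big[Rplus/0]_(j < K) (exp (f j (x i) q) * pd (f j (x i)) c q * pd (f j (x i)) c' q
                                  + exp (f j (x i) q) * pd (pd (f j (x i)) c') c q))
           * (\big[Rplus/0]_(j < K) exp (f j (x i) q))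
          - (\big[Rplus/0]_(j < K) (exp (f j (x i) q) * pd (f j (x i)) c q))
           * (\big[Rplus/0]_(j < K) (exp (f j (x i) q) * pd (f j (x i)) c' q)))
         / ((\big[Rplus/0]_(j < K) exp (f j (x i) q)) * (\big[Rplus/0]_(j < K) exp (f j (x i) q)))
       + \big[Rplus/0]_(r < K) pd (pd (f r (x i)) c') c q).

Lemma grad_Eg K n1 d n (f : 'I_K -> ('I_d -> R) -> param K n1 d -> R)
  (x : 'I_n -> 'I_d -> R) (y : 'I_n -> 'I_K) eps c' c p :
  (0 < K)%N ->
  (forall r i, has_pd (f r (x i)) c p) ->
  (forall r i, has_pd (pd (f r (x i)) c') c p) ->
  derivable_pt_lim (fun h => Eg f x y eps c' (shift p c h)) 0 (DEg f x y c' c p).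
Proof.
move=> HK H1 H2. rewrite /Eg /DEg.
apply: (dpl_eq _ _ (DEg f x y c' c p + eps * 0)); first by rewrite /DEg; ring.
apply: dpl_plus; last by apply: dpl_scal; apply: dpl_const.
apply: dpl_scal; apply: dpl_sum => i _.
apply: dpl_plus; last by apply: dpl_sum => r _; apply: pd_spec.
apply: dpl_minus; first exact: pd_spec.
set E := \big[Rplus/0]_(j < K) exp (f j (x i) p).
have HE : 0 < E by apply: sum_exp_pos.
eapply dpl_eq; last first.
  apply: dpl_div.
  - apply: dpl_sum => j _; apply: dpl_mult; last exact: pd_spec.
    apply: dpl_exp; exact: pd_spec.
  - apply: dpl_sum => j _; apply: dpl_exp; exact: pd_spec.
  - cbv beta; rewrite shift0; apply: Rgt_not_eq; exact: sum_exp_pos.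
by cbv beta; rewrite !shift0.
Qed.

Lemma sumR_minus (I : Type) (r : seq I) (P : pred I) (F G : I -> R) :
  \big[Rplus/0]_(i <- r | P i) (F i - G i) =
  \big[Rplus/0]_(i <- r | P i) F i - \big[Rplus/0]_(i <- r | P i) G i.
Proof. by rewrite /Rminus sumR_plus sumR_opp. Qed.

Lemma sumR_mulr (I : Type) (r : seq I) (P : pred I) (F : I -> R) c :
  \big[Rplus/0]_(i <- r | P i) (F i * c) = (\big[Rplus/0]_(i <- r | P i) F i) * c.
Proof. rewrite Rmult_comm -sumR_mull; apply: eq_bigr => i _; ring. Qed.

Lemma sum_ind_except K (e : 'I_K -> R) (j : 'I_K) c :
  \big[Rplus/0]_(s < K) (e s * (if s == j then 0 else c)) =
  c * (\big[Rplus/0]_(s < K) e s - e j).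
Proof.
rewrite (bigD1 j) //= [in RHS](bigD1 j) //= eqxx.
have -> : \big[Rplus/0]_(s < K | s != j) (e s * (if s == j then 0 else c)) =
          \big[Rplus/0]_(s < K | s != j) (e s * c).
  by apply: eq_bigr => s /negbTE ->.
rewrite sumR_mulr. set S := \big[Rplus/0]_(i < K | i != j) e i. rewrite -/S. ring.
Qed.

Lemma div_le1 x E : 0 < E -> x <= E -> x / E <= 1.
Proof. move=> HE H; apply: (Rmult_le_reg_r E) => //.
rewrite /Rdiv Rmult_assoc Rinv_l; lra. Qed.

Lemma sample_bound (K : nat) (J : finType) (w : J -> R) (e dd : 'I_K -> R)
  (a D : 'I_K -> J -> R) (yy : 'I_K) (C M : R) :
  (0 < K)%N -> (forall t, 0 <= w t) -> (forall j, 0 < e j) -> (forall j, 0 <= dd j) ->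
  (forall j t, 0 <= a j t) -> (forall j t, 0 <= D j t) ->
  (forall j, \big[Rplus/0]_(t : J) (w t * a j t) <= C) ->
  (forall j, \big[Rplus/0]_(t : J) (w t * D j t) <= M * dd j) ->
  0 <= C -> 0 <= M ->
  \big[Rplus/0]_(t : J) (w t * Rabs (
     D yy t - ((\big[Rplus/0]_(j < K) (e j * a j t * dd j + e j * D j t))
                 * (\big[Rplus/0]_(j < K) e j)
               - (\big[Rplus/0]_(j < K) (e j * a j t)) * (\big[Rplus/0]_(j < K) (e j * dd j)))
              / ((\big[Rplus/0]_(j < K) e j) * (\big[Rplus/0]_(j < K) e j))
     + \big[Rplus/0]_(r < K) D r t))
  <= (2 * C + M) * (dd yy - (\big[Rplus/0]_(j < K) (e j * dd j)) / (\big[Rplus/0]_(j < K) e j)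
                    + \big[Rplus/0]_(r < K) dd r).
Proof.
move=> HK Hw He Hdd Ha HD HC HM C0 M0.
set E := \big[Rplus/0]_(j < K) e j.
have HE : 0 < E.
  apply: Rlt_le_trans (He (Ordinal HK)) _.
  apply: sumR_ge_term => j; exact: Rlt_le.
have eE : forall j, e j <= E by move=> j; apply: sumR_ge_term => i; exact: Rlt_le.
set Sd := \big[Rplus/0]_(j < K) (e j * dd j).
set G := dd yy - Sd / E + \big[Rplus/0]_(r < K) dd r.
pose X t := D yy t + \big[Rplus/0]_(j < K) ((1 - e j / E) * D j t).
pose Y t := \big[Rplus/0]_(j < K) (e j * dd j * \big[Rplus/0]_(s < K) (e s * (a j t - a s t))).
have Hterm : forall t,
   D yy t - ((\big[Rplus/0]_(j < K) (e j * a j t * dd j + e j * D j t)) * E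
               - (\big[Rplus/0]_(j < K) (e j * a j t)) * Sd) / (E * E)
     + \big[Rplus/0]_(r < K) D r t = X t - Y t / (E * E).
  move=> t. rewrite /X /Y sumR_plus.
  have -> : \big[Rplus/0]_(j < K) ((1 - e j / E) * D j t) =
            \big[Rplus/0]_(r < K) D r t - (\big[Rplus/0]_(j < K) (e j * D j t)) / E.
    rewrite /Rdiv -sumR_mulr -sumR_minus; apply: eq_bigr => j _; ring.
  have -> : \big[Rplus/0]_(j < K) (e j * dd j * \big[Rplus/0]_(s < K) (e s * (a j t - a s t))) =
            (\big[Rplus/0]_(j < K) (e j * a j t * dd j)) * E - (\big[Rplus/0]_(j < K) (e j * a j t)) * Sd.
    set A := \big[Rplus/0]_(j < K) (e j * a j t).
    have inner : forall j, \big[Rplus/0]_(s < K) (e s * (a j t - a s t)) = a j t * E - A.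
      move=> j; rewrite /E /A -sumR_mull -sumR_minus; apply: eq_bigr => s _; ring.
    rewrite (eq_bigr (fun j => e j * a j t * dd j * E - e j * dd j * A)); last first.
      by move=> j _; rewrite inner; ring.
    rewrite sumR_minus !sumR_mulr -/Sd. set S1 := \big[Rplus/0]_(j < K) (e j * a j t * dd j). ring.
  set S1 := \big[Rplus/0]_(j < K) (e j * a j t * dd j). set S2 := \big[Rplus/0]_(j < K) (e j * D j t).
  set S3 := \big[Rplus/0]_(r < K) D r t. set A := \big[Rplus/0]_(j < K) (e j * a j t).
  field; lra.
have -> : \big[Rplus/0]_(t : J) (w t * Rabs (
     D yy t - ((\big[Rplus/0]_(j < K) (e j * a j t * dd j + e j * D j t)) * E
               - (\big[Rplus/0]_(j < K) (e j * a j t)) * Sd) / (E * E)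
     + \big[Rplus/0]_(r < K) D r t)) =
     \big[Rplus/0]_(t : J) (w t * Rabs (X t - Y t / (E * E))).
  by apply: eq_bigr => t _; rewrite Hterm.
have HX : forall t, 0 <= X t.
  move=> t; rewrite /X; have := HD yy t.
  have : 0 <= \big[Rplus/0]_(j < K) ((1 - e j / E) * D j t).
    apply: sumR_ge0 => j _; apply: Rmult_le_pos; last exact: HD.
    have := eE j; have := He j => h1 h2.
    have : e j / E <= 1 by exact: div_le1.
    lra.
  lra.
have BX : \big[Rplus/0]_(t : J) (w t * X t) <= M * (dd yy + \big[Rplus/0]_(r < K) dd r - Sd / E).
  rewrite /X.
  have -> : \big[Rplus/0]_(t : J) (w t * (D yy t + \big[Rplus/0]_(j < K) ((1 - e j / E) * D j t)))
      = \big[Rplus/0]_(t : J) (w t * D yy t) +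
        \big[Rplus/0]_(j < K) ((1 - e j / E) * \big[Rplus/0]_(t : J) (w t * D j t)).
    rewrite [X in _ = _ + X](eq_bigr (fun j => \big[Rplus/0]_(t : J) ((1 - e j / E) * (w t * D j t)))); last first.
      by move=> j _; rewrite sumR_mull.
    rewrite exchange_big -sumR_plus. apply: eq_bigr => t _.
    rewrite Rmult_plus_distr_l -sumR_mull. congr (_ + _). apply: eq_bigr => j _; ring.
  have -> : dd yy + \big[Rplus/0]_(r < K) dd r - Sd / E =
            dd yy + \big[Rplus/0]_(j < K) ((1 - e j / E) * dd j).
    have -> : \big[Rplus/0]_(j < K) ((1 - e j / E) * dd j) = \big[Rplus/0]_(r < K) dd r - Sd / E.
      by rewrite /Sd /Rdiv -sumR_mulr -sumR_minus; apply: eq_bigr => j _; ring.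
    ring.
  rewrite Rmult_plus_distr_l -sumR_mull.
  apply: Rplus_le_compat; first exact: HM.
  apply: sumR_le => j _.
  have h1 : 0 <= 1 - e j / E.
    have := eE j; have := He j => h1 h2.
    have : e j / E <= 1 by exact: div_le1.
    lra.
  have := HM j. nra.
have BYt : forall t, Rabs (Y t) <=
    \big[Rplus/0]_(j < K) \big[Rplus/0]_(s < K) (e j * dd j * e s * Rabs (a j t - a s t)).
  move=> t; rewrite /Y; eapply Rle_trans; [apply: sumR_abs|]; apply: sumR_le => j _.
  have ejd : 0 <= e j * dd j by have := He j; have := Hdd j; nra.
  rewrite Rabs_mult (Rabs_pos_eq _ ejd).
  eapply Rle_trans; [apply: (Rmult_le_compat_l _ _ _ ejd); apply: sumR_abs|].
  rewrite -sumR_mull; apply: Req_le; apply: eq_bigr => s _.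
  rewrite Rabs_mult (Rabs_pos_eq (e s)); [ring | exact: Rlt_le].
have Hpair : forall j s, \big[Rplus/0]_(t : J) (w t * Rabs (a j t - a s t)) <= (if s == j then 0 else 2 * C).
  move=> j s; case: eqP => [->|_].
    rewrite big1; first lra. by move=> t _; rewrite Rminus_diag Rabs_R0 Rmult_0_r.
  apply: Rle_trans (_ : \big[Rplus/0]_(t : J) (w t * a j t + w t * a s t) <= _).
    apply: sumR_le => t _. apply: Rle_trans (_ : w t * (a j t + a s t) <= _); last lra.
    apply: Rmult_le_compat_l; first exact: Hw.
    have := Ha j t; have := Ha s t => h1 h2. split_Rabs; lra.
  rewrite sumR_plus; have := HC j; have := HC s; lra.
have BY : \big[Rplus/0]_(t : J) (w t * Rabs (Y t)) <=
          2 * C * E * (E * \big[Rplus/0]_(r < K) dd r - Sd).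
  apply: Rle_trans (_ : \big[Rplus/0]_(t : J) (w t *
      \big[Rplus/0]_(j < K) \big[Rplus/0]_(s < K) (e j * dd j * e s * Rabs (a j t - a s t))) <= _).
    apply: sumR_le => t _; apply: Rmult_le_compat_l; [exact: Hw | exact: BYt].
  have -> : \big[Rplus/0]_(t : J) (w t *
      \big[Rplus/0]_(j < K) \big[Rplus/0]_(s < K) (e j * dd j * e s * Rabs (a j t - a s t))) =
      \big[Rplus/0]_(j < K) \big[Rplus/0]_(s < K) (e j * dd j * e s *
           \big[Rplus/0]_(t : J) (w t * Rabs (a j t - a s t))).
    rewrite (eq_bigr (fun t => \big[Rplus/0]_(j < K) \big[Rplus/0]_(s < K)
         (w t * (e j * dd j * e s * Rabs (a j t - a s t))))); last first.
      by move=> t _; rewrite -sumR_mull; apply: eq_bigr => j _; rewrite -sumR_mull.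
    rewrite exchange_big; apply: eq_bigr => j _.
    rewrite exchange_big; apply: eq_bigr => s _.
    rewrite -sumR_mull; apply: eq_bigr => t _; ring.
  apply: Rle_trans (_ : \big[Rplus/0]_(j < K) (e j * dd j * (2 * C * (E - e j))) <= _).
    apply: sumR_le => j _.
    rewrite -(sum_ind_except e j) -sumR_mull; apply: sumR_le => s _.
    have h : 0 <= e j * dd j * e s by apply: Rmult_le_pos; [apply: Rmult_le_pos; [apply: Rlt_le; exact: He | exact: Hdd] | apply: Rlt_le; exact: He].
    rewrite -Rmult_assoc; apply: Rmult_le_compat_l => //; exact: Hpair.
  apply: Rle_trans (_ : \big[Rplus/0]_(j < K) (E * dd j * (2 * C * (E - e j))) <= _).
    apply: sumR_le => j _.
    have := eE j; have := Hdd j; have := He j => h1 h2 h3.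
    have : 0 <= 2 * C * (E - e j) by nra.
    move=> hz; apply: Rmult_le_compat_r => //; apply: Rmult_le_compat_r => //.
  apply: Req_le.
  rewrite /Sd (eq_bigr (fun j => 2 * C * E * (E * dd j - e j * dd j))); last first.
    by move=> j _; ring.
  by rewrite sumR_mull sumR_minus sumR_mull.
apply: Rle_trans (_ : \big[Rplus/0]_(t : J) (w t * X t + w t * Rabs (Y t) * / (E * E)) <= _).
  apply: sumR_le => t _.
  have hE2 : 0 < E * E by nra.
  have : Rabs (X t - Y t / (E * E)) <= X t + Rabs (Y t) * / (E * E).
    eapply Rle_trans; first exact: Rabs_triang.
    rewrite Rabs_Ropp Rabs_pos_eq; last exact: HX.
    rewrite /Rdiv Rabs_mult (Rabs_pos_eq (/ (E * E))); [lra | exact: Rlt_le (Rinv_0_lt_compat _ hE2)].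
  have := Hw t. nra.
rewrite sumR_plus sumR_mulr.
have hE2 : 0 < E * E by nra.
have hdy := Hdd yy.
have : \big[Rplus/0]_(t : J) (w t * Rabs (Y t)) * / (E * E) <= 2 * C * (\big[Rplus/0]_(r < K) dd r - Sd / E).
  apply: Rle_trans (_ : 2 * C * E * (E * \big[Rplus/0]_(r < K) dd r - Sd) * / (E * E) <= _).
    apply: Rmult_le_compat_r => //; exact: Rlt_le (Rinv_0_lt_compat _ hE2).
  apply: Req_le; field; lra.
have : 0 <= \big[Rplus/0]_(r < K) dd r - Sd / E.
  have := @sample_nonneg K e dd HK He Hdd. rewrite -/E -/Sd. lra.
move: BX. rewrite /G. nra.
Qed.

Definition dFv (I : finType) (i0 : I) (g gp : I -> R) (rw P pw : R) : R :=
  (rw * ((P - 1) * Rpower (g i0) (P - 1 - 1) * gp i0) * Rpower (\big[Rplus/0]_(i : I) Rpower (g i) P) (/ pw)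
   - (/ pw * Rpower (\big[Rplus/0]_(i : I) Rpower (g i) P) (/ pw - 1)
        * \big[Rplus/0]_(i : I) (P * Rpower (g i) (P - 1) * gp i)) * (rw * Rpower (g i0) (P - 1)))
  / (Rpower (\big[Rplus/0]_(i : I) Rpower (g i) P) (/ pw) * Rpower (\big[Rplus/0]_(i : I) Rpower (g i) P) (/ pw)).

Lemma sum_pos (I : finType) (i0 : I) (F : I -> R) : (forall i, 0 < F i) -> 0 < \big[Rplus/0]_(i : I) F i.
Proof. move=> H; apply: Rlt_le_trans (H i0) _; apply: sumR_ge_term => i; exact: Rlt_le. Qed.

Lemma dF_deriv (I : finType) (i0 : I) (G : I -> R -> R) (gp : I -> R) rw P pw :
  (forall i, derivable_pt_lim (G i) 0 (gp i)) -> (forall i, 0 < G i 0) ->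
  derivable_pt_lim (fun h => rw * Rpower (G i0 h) (P - 1) / Rpower (\big[Rplus/0]_(i : I) Rpower (G i h) P) (/ pw))
    0 (dFv i0 (fun i => G i 0) gp rw P pw).
Proof.
move=> HG Hp. rewrite /dFv.
have HS : 0 < \big[Rplus/0]_(i : I) Rpower (G i 0) P by apply: (sum_pos i0) => i; apply: exp_pos.
apply: dpl_div.
- apply: dpl_scal; apply: dpl_pow => //.
- apply: dpl_pow => //. apply: dpl_sum => i _. apply: dpl_pow => //.
- apply: Rgt_not_eq; apply: exp_pos.
Qed.

Lemma Rpower_pos x y : 0 < Rpower x y.
Proof. exact: exp_pos. Qed.

Lemma dF_bound (I J : finType) (i0 : I) (g : I -> R) (gp : I -> J -> R) (w : J -> R) rw P pw L :
  1 < pw -> P = pw / (pw - 1) -> 0 < rw -> 0 <= L -> (forall i, 0 < g i) -> (forall t, 0 <= w t) ->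
  (forall i, \big[Rplus/0]_(t : J) (w t * Rabs (gp i t)) <= L * g i) ->
  \big[Rplus/0]_(t : J) (w t * Rabs (dFv i0 g (fun i => gp i t) rw P pw))
   <= 2 * ((P - 1) * L) * (rw * Rpower (g i0) (P - 1) / Rpower (\big[Rplus/0]_(i : I) Rpower (g i) P) (/ pw)).
Proof.
move=> Hpw HP Hrw HL Hg Hw Hgp.
have HP1 : 0 < P - 1 by rewrite HP; apply: (Rmult_lt_reg_r (pw - 1)); [lra|]; field_simplify; lra.
have HPpw : P / pw = P - 1 by rewrite HP; field; lra.
set S := \big[Rplus/0]_(i : I) Rpower (g i) P.
have HS : 0 < S by apply: (sum_pos i0) => i; apply: Rpower_pos.
set N := Rpower S (/ pw).
have HN : 0 < N by apply: Rpower_pos.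
set A1 := rw * (P - 1) * Rpower (g i0) (P - 1 - 1) * N.
set A2 := / pw * Rpower S (/ pw - 1) * (rw * Rpower (g i0) (P - 1)).
have HA1 : 0 <= A1.
  rewrite /A1; repeat apply: Rmult_le_pos; try lra; apply: Rlt_le; apply: Rpower_pos.
have HA2 : 0 <= A2.
  have hpw : 0 < / pw by apply: Rinv_0_lt_compat; lra.
  rewrite /A2; repeat apply: Rmult_le_pos; try lra; apply: Rlt_le; apply: Rpower_pos.
have HB : forall i, 0 <= P * Rpower (g i) (P - 1).
  move=> i; apply: Rmult_le_pos; [lra | apply: Rlt_le; apply: Rpower_pos].
have hNN : 0 < N * N by nra.
have Step1 : forall t, Rabs (dFv i0 g (fun i => gp i t) rw P pw) <=
   (A1 * Rabs (gp i0 t) + A2 * \big[Rplus/0]_(i : I) (P * Rpower (g i) (P - 1) * Rabs (gp i t))) / (N * N).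
  move=> t. rewrite /dFv -/S -/N.
  have -> : (rw * ((P - 1) * Rpower (g i0) (P - 1 - 1) * gp i0 t) * N
     - / pw * Rpower S (/ pw - 1) * \big[Rplus/0]_(i : I) (P * Rpower (g i) (P - 1) * gp i t)
       * (rw * Rpower (g i0) (P - 1))) / (N * N)
     = (A1 * gp i0 t - A2 * \big[Rplus/0]_(i : I) (P * Rpower (g i) (P - 1) * gp i t)) * / (N * N).
    rewrite /A1 /A2 /Rdiv; ring.
  rewrite /Rdiv Rabs_mult (Rabs_pos_eq (/ (N * N))); last exact: Rlt_le (Rinv_0_lt_compat _ hNN).
  apply: Rmult_le_compat_r; first exact: Rlt_le (Rinv_0_lt_compat _ hNN).
  eapply Rle_trans; first exact: Rabs_triang.
  rewrite Rabs_Ropp (Rabs_mult A1) (Rabs_mult A2) (Rabs_pos_eq _ HA1) (Rabs_pos_eq _ HA2).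
  apply: Rplus_le_compat_l; apply: Rmult_le_compat_l => //.
  eapply Rle_trans; [apply: sumR_abs|]; apply: sumR_le => i _.
  by rewrite Rabs_mult (Rabs_pos_eq _ (HB i)); apply: Rle_refl.
apply: Rle_trans (_ : \big[Rplus/0]_(t : J) (w t *
   ((A1 * Rabs (gp i0 t) + A2 * \big[Rplus/0]_(i : I) (P * Rpower (g i) (P - 1) * Rabs (gp i t))) / (N * N)))
   <= _).
  apply: sumR_le => t _; apply: Rmult_le_compat_l; [exact: Hw | exact: Step1].
have -> : \big[Rplus/0]_(t : J) (w t *
   ((A1 * Rabs (gp i0 t) + A2 * \big[Rplus/0]_(i : I) (P * Rpower (g i) (P - 1) * Rabs (gp i t))) / (N * N)))
   = (A1 * \big[Rplus/0]_(t : J) (w t * Rabs (gp i0 t))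
      + A2 * \big[Rplus/0]_(i : I) (P * Rpower (g i) (P - 1) * \big[Rplus/0]_(t : J) (w t * Rabs (gp i t)))) / (N * N).
  rewrite /Rdiv.
  transitivity ((\big[Rplus/0]_(t : J) (A1 * (w t * Rabs (gp i0 t)) + A2 * \big[Rplus/0]_(i : I) (P * Rpower (g i) (P - 1) * (w t * Rabs (gp i t))))) * / (N * N)).
    rewrite -sumR_mulr; apply: eq_bigr => t _.
    have -> : \big[Rplus/0]_(i : I) (P * Rpower (g i) (P - 1) * (w t * Rabs (gp i t))) =
              w t * \big[Rplus/0]_(i : I) (P * Rpower (g i) (P - 1) * Rabs (gp i t)).
      rewrite -sumR_mull; apply: eq_bigr => i _; ring.
    ring.
  congr (_ * _). rewrite sumR_plus. congr (_ + _).
    by rewrite sumR_mull.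
  rewrite sumR_mull; congr (A2 * _).
  rewrite exchange_big; apply: eq_bigr => i _; by rewrite sumR_mull.
apply: Rle_trans (_ : (A1 * (L * g i0) + A2 * \big[Rplus/0]_(i : I) (P * Rpower (g i) (P - 1) * (L * g i))) / (N * N) <= _).
  rewrite /Rdiv; apply: Rmult_le_compat_r; first exact: Rlt_le (Rinv_0_lt_compat _ hNN).
  apply: Rplus_le_compat; apply: Rmult_le_compat_l => //.
  apply: sumR_le => i _; apply: Rmult_le_compat_l => //.
have k1 : Rpower (g i0) (P - 1 - 1) * g i0 = Rpower (g i0) (P - 1).
  by rewrite -{2}(Rpower_1 (g i0)) // -Rpower_plus; congr Rpower; ring.
have k2 : forall i, Rpower (g i) (P - 1) * g i = Rpower (g i) P.
  by move=> i; rewrite -{2}(Rpower_1 (g i)) // -Rpower_plus; congr Rpower; ring.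
have k3 : Rpower S (/ pw - 1) * S = N.
  by rewrite /N -{2}(Rpower_1 S) // -Rpower_plus; congr Rpower; ring.
have -> : \big[Rplus/0]_(i : I) (P * Rpower (g i) (P - 1) * (L * g i)) = P * L * S.
  rewrite /S -sumR_mull; apply: eq_bigr => i _; rewrite -k2; ring.
apply: Req_le. rewrite /A1 /A2.
have -> : rw * (P - 1) * Rpower (g i0) (P - 1 - 1) * N * (L * g i0) = rw * (P - 1) * L * N * Rpower (g i0) (P - 1).
  rewrite -k1; ring.
have -> : / pw * Rpower S (/ pw - 1) * (rw * Rpower (g i0) (P - 1)) * (P * L * S) = (P / pw) * rw * L * Rpower (g i0) (P - 1) * (Rpower S (/ pw - 1) * S).
  rewrite /Rdiv; ring.
rewrite k3 HPpw. field. lra.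
Qed.

Lemma rpow_pos x y : 0 < x -> rpow x y = Rpower x y.
Proof. by rewrite /rpow; case: Rlt_dec. Qed.

Lemma psi_pos P z : 0 < z -> psi P z = Rpower z (P - 1).
Proof. move=> hz; rewrite /psi /sgn Rabs_pos_eq; last lra.
rewrite rpow_pos //; destruct (Rlt_dec 0 z); [| lra]. simpl; ring. Qed.

Lemma conj_exp_prop pw : 1 < pw -> (conj_exp pw - 1) * pw = conj_exp pw.
Proof. move=> h; rewrite /conj_exp; field; lra. Qed.

Lemma psi_pow pw z : 1 < pw -> 0 < z ->
  rpow (Rabs (psi (conj_exp pw) z)) pw = Rpower z (conj_exp pw).
Proof. move=> h hz; rewrite psi_pos // Rabs_pos_eq; last exact: Rlt_le (Rpower_pos _ _).
by rewrite rpow_pos ?Rpower_mult ?conj_exp_prop //; apply: Rpower_pos. Qed.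

Lemma GPhi_w K n1 d (Ph : param K n1 d -> R) pw pu rw ru (q : param K n1 d) i j :
  (0 < n1)%N -> 1 < pw -> (forall c, 0 < pd Ph c q) ->
  GPhi Ph pw pu rw ru (CW i j) q =
  rw * Rpower (pd Ph (CW i j) q) (conj_exp pw - 1)
    / Rpower (\big[Rplus/0]_(j' : 'I_n1) Rpower (pd Ph (CW i j') q) (conj_exp pw)) (/ pw).
Proof.
move=> n1p h hp; rewrite /= /norm_row /psi_grad psi_pos //.
rewrite [in LHS](eq_bigr (fun j' => Rpower (pd Ph (CW i j') q) (conj_exp pw))); last first.
  by move=> j' _; rewrite /= psi_pow.
rewrite rpow_pos //. apply: (sum_pos (Ordinal n1p)) => j'; exact: Rpower_pos.
Qed.

Lemma GPhi_u K n1 d (Ph : param K n1 d -> R) pw pu rw ru (q : param K n1 d) a b :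
  (0 < n1)%N -> (0 < d)%N -> 1 < pu -> (forall c, 0 < pd Ph c q) ->
  GPhi Ph pw pu rw ru (CU a b) q =
  ru * Rpower (pd Ph (CU a b) q) (conj_exp pu - 1)
    / Rpower (\big[Rplus/0]_(ab : 'I_n1 * 'I_d) Rpower (pd Ph (CU ab.1 ab.2) q) (conj_exp pu)) (/ pu).
Proof.
move=> n1p dp h hp; rewrite /= /norm_u /psi_grad psi_pos //.
rewrite pair_big /=.
rewrite [in LHS](eq_bigr (fun ab : 'I_n1 * 'I_d => Rpower (pd Ph (CU ab.1 ab.2) q) (conj_exp pu))); last first.
  by move=> ab _; rewrite /= psi_pow.
rewrite rpow_pos //. apply: (sum_pos (Ordinal n1p, Ordinal dp)) => ab; exact: Rpower_pos.
Qed.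

Lemma DEg_bound K n1 d n (f : 'I_K -> ('I_d -> R) -> param K n1 d -> R)
  (x : 'I_n -> 'I_d -> R) (y : 'I_n -> 'I_K) eps (J : finType) (tau : J -> coord K n1 d)
  c'' (p : param K n1 d) C M :
  (0 < n)%N -> (0 < K)%N -> 0 < eps -> 0 <= C -> 0 <= M ->
  (forall t, 0 <= p (tau t)) ->
  (forall r i c, 0 <= pd (f r (x i)) c p) ->
  (forall r i c1 c2, 0 <= pd (pd (f r (x i)) c1) c2 p) ->
  (forall i r, \big[Rplus/0]_(t : J) (p (tau t) * pd (f r (x i)) (tau t) p) <= C) ->
  (forall i r, \big[Rplus/0]_(t : J) (p (tau t) * pd (pd (f r (x i)) c'') (tau t) p)
                 <= M * pd (f r (x i)) c'' p) ->
  \big[Rplus/0]_(t : J) (p (tau t) * Rabs (DEg f x y c'' (tau t) p))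
    <= (2 * C + M) * Eg f x y eps c'' p.
Proof.
move=> Hn HK He HC HM Hw Hd1 Hd2 B1 B2.
have Hn' : 0 < / INR n by apply: Rinv_0_lt_compat; apply: lt_0_INR; apply/ltP.
rewrite /DEg /Eg.
set T := fun (i : 'I_n) (t : J) =>
     pd (pd (f (y i) (x i)) c'') (tau t) p
       - ((\big[Rplus/0]_(j < K) (exp (f j (x i) p) * pd (f j (x i)) (tau t) p * pd (f j (x i)) c'' p
                                  + exp (f j (x i) p) * pd (pd (f j (x i)) c'') (tau t) p))
           * (\big[Rplus/0]_(j < K) exp (f j (x i) p))
          - (\big[Rplus/0]_(j < K) (exp (f j (x i) p) * pd (f j (x i)) (tau t) p))
           * (\big[Rplus/0]_(j < K) (exp (f j (x i) p) * pd (f j (x i)) c'' p)))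
         / ((\big[Rplus/0]_(j < K) exp (f j (x i) p)) * (\big[Rplus/0]_(j < K) exp (f j (x i) p)))
       + \big[Rplus/0]_(r < K) pd (pd (f r (x i)) c'') (tau t) p.
set g := fun (i : 'I_n) =>
      pd (f (y i) (x i)) c'' p
       - (\big[Rplus/0]_(j < K) (exp (f j (x i) p) * pd (f j (x i)) c'' p))
          / (\big[Rplus/0]_(j < K) exp (f j (x i) p))
       + \big[Rplus/0]_(r < K) pd (f r (x i)) c'' p.
have Hs : forall i, \big[Rplus/0]_(t : J) (p (tau t) * Rabs (T i t)) <= (2 * C + M) * g i.
  move=> i. rewrite /T /g.
  exact: (@sample_bound K J (fun t => p (tau t)) (fun j => exp (f j (x i) p))
     (fun j => pd (f j (x i)) c'' p) (fun j t => pd (f j (x i)) (tau t) p)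
     (fun j t => pd (pd (f j (x i)) c'') (tau t) p) (y i) C M HK Hw (fun j => exp_pos _)
     (fun j => Hd1 j i c'') (fun j t => Hd1 j i (tau t)) (fun j t => Hd2 j i c'' (tau t))
     (fun j => B1 i j) (fun j => B2 i j) HC HM).
have Hg : forall i, 0 <= g i.
  move=> i; rewrite /g.
  have := @sample_nonneg K (fun j => exp (f j (x i) p)) (fun j => pd (f j (x i)) c'' p) HK
    (fun j => exp_pos _) (fun j => Hd1 j i c'').
  have := Hd1 (y i) i c''. lra.
apply: Rle_trans (_ : \big[Rplus/0]_(t : J) (/ INR n * \big[Rplus/0]_(i < n) (p (tau t) * Rabs (T i t))) <= _).
  apply: sumR_le => t _.
  rewrite Rabs_mult (Rabs_pos_eq (/ INR n)); last lra.
  have -> : p (tau t) * (/ INR n * Rabs (\big[Rplus/0]_(i < n) T i t)) =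
            / INR n * (p (tau t) * Rabs (\big[Rplus/0]_(i < n) T i t)) by ring.
  apply: Rmult_le_compat_l; first lra.
  rewrite sumR_mull. apply: Rmult_le_compat_l; first exact: Hw.
  exact: sumR_abs.
rewrite sumR_mull exchange_big.
have Hk := kap_ge1 c''.
have : / INR n * \big[Rplus/0]_(i < n) \big[Rplus/0]_(t : J) (p (tau t) * Rabs (T i t))
       <= / INR n * ((2 * C + M) * \big[Rplus/0]_(i < n) g i).
  apply: Rmult_le_compat_l; first lra.
  rewrite -sumR_mull; apply: sumR_le => i _; exact: Hs.
move=> h2. eapply Rle_trans; first exact: h2.
have -> : / INR n * ((2 * C + M) * \big[Rplus/0]_(i < n) g i) =
          (2 * C + M) * (/ INR n * \big[Rplus/0]_(i < n) g i) by ring.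
apply: Rmult_le_compat_l; first lra.
have : 0 <= eps * kap c'' by nra.
rewrite /g; cbv beta. lra.
Qed.

Unset Implicit Arguments.
Set Strict Implicit.

Theorem mainTheorem10
  (K n1 d n : nat) (Hn : (0 < n)%N) (Hn1 : (0 < n1)%N) (Hd : (0 < d)%N)
  (x : 'I_n -> 'I_d -> R) (Hx : forall i l, 0 <= x i l)
  (y : 'I_n -> 'I_K)
  (pw pu rw ru eps : R)
  (Hpw : 1 < pw) (Hpu : 1 < pu) (Hrw : 0 < rw) (Hru : 0 < ru) (Heps : 0 < eps)
  (f : 'I_K -> ('I_d -> R) -> param K n1 d -> R)
  (* f_r(.)(x^i) is C^2 with nonnegative first and second partials
     on an open neighbourhood U of B_{++} *)
  (HU : exists U : param K n1 d -> Prop,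
      is_open U /\ (forall p, Bpp pw pu rw ru p -> U p) /\
      (forall (r : 'I_K) (i : 'I_n), C2_on U (f r (x i))) /\
      (forall (r : 'I_K) (i : 'I_n) p, U p ->
         (forall c, 0 <= pd (f r (x i)) c p) /\
         (forall c1 c2, 0 <= pd (pd (f r (x i)) c1) c2 p)))
  (Cw Cu Mww Mwu Muw Muu : R)
  (HCw : 0 < Cw) (HCu : 0 < Cu) (HMww : 0 < Mww) (HMwu : 0 < Mwu)
  (HMuw : 0 < Muw) (HMuu : 0 < Muu)
  (H1 : forall (i : 'I_n) (p : param K n1 d) (r s : 'I_K), Bpp pw pu rw ru p ->
     \big[Rplus/0]_(t < n1) (p (CW s t) * pd (f r (x i)) (CW s t) p) <= Cw)
  (H2 : forall (i : 'I_n) (p : param K n1 d) (r : 'I_K), Bpp pw pu rw ru p ->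
     \big[Rplus/0]_(a < n1) \big[Rplus/0]_(b < d)
        (p (CU a b) * pd (f r (x i)) (CU a b) p) <= Cu)
  (H3 : forall (i : 'I_n) (p : param K n1 d) (r s q : 'I_K) (b' : 'I_n1),
     Bpp pw pu rw ru p ->
     \big[Rplus/0]_(t < n1)
        (p (CW s t) * pd (pd (f r (x i)) (CW q b')) (CW s t) p)
     <= Mww * pd (f r (x i)) (CW q b') p)
  (H4 : forall (i : 'I_n) (p : param K n1 d) (r q : 'I_K) (b' : 'I_n1),
     Bpp pw pu rw ru p ->
     \big[Rplus/0]_(a < n1) \big[Rplus/0]_(b < d)
        (p (CU a b) * pd (pd (f r (x i)) (CW q b')) (CU a b) p)
     <= Mwu * pd (f r (x i)) (CW q b') p)
  (H5 : forall (i : 'I_n) (p : param K n1 d) (r s : 'I_K) (a' : 'I_n1) (b'' : 'I_d),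
     Bpp pw pu rw ru p ->
     \big[Rplus/0]_(t < n1)
        (p (CW s t) * pd (pd (f r (x i)) (CU a' b'')) (CW s t) p)
     <= Muw * pd (f r (x i)) (CU a' b'') p)
  (H6 : forall (i : 'I_n) (p : param K n1 d) (r : 'I_K) (a' : 'I_n1) (b'' : 'I_d),
     Bpp pw pu rw ru p ->
     \big[Rplus/0]_(a < n1) \big[Rplus/0]_(b < d)
        (p (CU a b) * pd (pd (f r (x i)) (CU a' b'')) (CU a b) p)
     <= Muu * pd (f r (x i)) (CU a' b'') p) :
  let Ph := Phi f x y eps in
  let F := GPhi Ph pw pu rw ru in
  let A := Amat K pw pu Cw Cu Mww Mwu Muw Muu in
  (* F = G^Phi is well defined on B_{++} *)
  (forall p, Bpp pw pu rw ru p ->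
     (forall c, has_pd Ph c p) /\
     (forall i : 'I_K, norm_row pw (psi_grad Ph pw p) i <> 0) /\
     norm_u pu (psi_grad Ph pu p) <> 0 /\
     (forall c c', has_pd (F c') c p)) /\
  (* the bounds with the matrix A (index K = the paper's K+1) *)
  (forall p, Bpp pw pu rw ru p ->
     forall (i k : 'I_K) (j a : 'I_n1) (b : 'I_d),
       ip_w (F (CW i j)) k p <= A i k * F (CW i j) p /\
       ip_u (F (CW i j)) p <= A i K * F (CW i j) p /\
       ip_w (F (CU a b)) k p <= A K k * F (CU a b) p /\
       ip_u (F (CU a b)) p <= A K K * F (CU a b) p).
Proof.
move=> Ph F A.
case: HU => U [HUo [HBU [HC2 Hnn]]].
have HK : (0 < K)%N by apply: (leq_ltn_trans (leq0n _) (ltn_ord (y (Ordinal Hn)))).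
have hpdf : forall q, U q -> forall r i c, has_pd (f r (x i)) c q.
  by move=> q Uq r i c; case: (HC2 r i q Uq) => _ [H _]; case: (H c).
have hpd2 : forall q, U q -> forall r i c1 c2, has_pd (pd (f r (x i)) c1) c2 q.
  by move=> q Uq r i c1 c2; case: (HC2 r i q Uq) => _ [_ H]; case: (H c1 c2).
have gradU : forall q, U q -> forall c, derivable_pt_lim (fun h => Ph (shift q c h)) 0 (Eg f x y eps c q).
  move=> q Uq c; apply: grad_Phi => // r i; exact: hpdf.
have pdEg : forall q, U q -> forall c, pd Ph c q = Eg f x y eps c q.
  move=> q Uq c; apply: pd_unique; exact: gradU.
have pdpos : forall q, U q -> forall c, 0 < pd Ph c q.
  move=> q Uq c; rewrite pdEg //; apply: Rlt_le_trans (Heps) _; apply: Eg_ge => // r i.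
  by case: (Hnn r i q Uq) => H _; apply: H.
have local : forall p, Bpp pw pu rw ru p -> exists del, 0 < del /\
    forall c h, Rabs h < del -> U (shift p c h).
  move=> p Bp; case: (HUo p (HBU p Bp)) => del [Hdel Hn']; exists del; split => // c h hh.
  apply: Hn' => c0; rewrite /shift; case: (c0 == c).
    by have -> : p c0 + h - p c0 = h by ring.
  by rewrite Rminus_diag Rabs_R0.
have DG : forall p, Bpp pw pu rw ru p -> forall c'' c,
    derivable_pt_lim (fun h => pd Ph c'' (shift p c h)) 0 (DEg f x y c'' c p).
  move=> p Bp c'' c; case: (local p Bp) => del [Hdel Hl].
  apply: (dpl_local (fun h => Eg f x y eps c'' (shift p c h))).
    exists del; split => // h hh; rewrite pdEg //; exact: Hl.
  apply: grad_Eg => // r i; [apply: hpdf | apply: hpd2]; exact: HBU.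
have FWd : forall p, Bpp pw pu rw ru p -> forall i j c,
    derivable_pt_lim (fun h => F (CW i j) (shift p c h)) 0
      (dFv j (fun j' => pd Ph (CW i j') p) (fun j' => DEg f x y (CW i j') c p) rw (conj_exp pw) pw).
  move=> p Bp i j c; case: (local p Bp) => del [Hdel Hl].
  apply: (dpl_local (fun h => rw * Rpower (pd Ph (CW i j) (shift p c h)) (conj_exp pw - 1) /
      Rpower (\big[Rplus/0]_(j' : 'I_n1) Rpower (pd Ph (CW i j') (shift p c h)) (conj_exp pw)) (/ pw))).
    exists del; split => // h hh; rewrite /F GPhi_w //; move=> c0; apply: pdpos; exact: Hl.
  eapply dpl_eq; last first.
    apply: (dF_deriv j (G := fun j' h => pd Ph (CW i j') (shift p c h))).
      move=> j'; exact: DG.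
    move=> j'; cbv beta; rewrite shift0; apply: pdpos; exact: HBU.
  by cbv beta; rewrite shift0.
have FUd : forall p, Bpp pw pu rw ru p -> forall a b c,
    derivable_pt_lim (fun h => F (CU a b) (shift p c h)) 0
      (dFv (a, b) (fun ab : 'I_n1 * 'I_d => pd Ph (CU ab.1 ab.2) p)
         (fun ab => DEg f x y (CU ab.1 ab.2) c p) ru (conj_exp pu) pu).
  move=> p Bp a b c; case: (local p Bp) => del [Hdel Hl].
  apply: (dpl_local (fun h => ru * Rpower (pd Ph (CU a b) (shift p c h)) (conj_exp pu - 1) /
      Rpower (\big[Rplus/0]_(ab : 'I_n1 * 'I_d) Rpower (pd Ph (CU ab.1 ab.2) (shift p c h)) (conj_exp pu)) (/ pu))).
    exists del; split => // h hh; rewrite /F GPhi_u //; move=> c0; apply: pdpos; exact: Hl.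
  eapply dpl_eq; last first.
    apply: (dF_deriv (a, b) (G := fun ab h => pd Ph (CU ab.1 ab.2) (shift p c h))).
      move=> ab; exact: DG.
    move=> ab; cbv beta; rewrite shift0; apply: pdpos; exact: HBU.
  by cbv beta; rewrite shift0.
have Hpw1 : pw = pw := erefl.
split.
  move=> p Bp; have Up := HBU p Bp; split; [|split; [|split]].
  - move=> c; exists (Eg f x y eps c p); exact: gradU.
  - move=> i; rewrite /norm_row.
    rewrite (eq_bigr (fun j => Rpower (pd Ph (CW i j) p) (conj_exp pw))); last first.
      by move=> j _; rewrite /psi_grad psi_pow //; apply: pdpos.
    rewrite rpow_pos; first by apply: Rgt_not_eq; apply: Rpower_pos.
    apply: (sum_pos (Ordinal Hn1)) => j; exact: Rpower_pos.
  - rewrite /norm_u pair_big /=.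
    rewrite (eq_bigr (fun ab : 'I_n1 * 'I_d => Rpower (pd Ph (CU ab.1 ab.2) p) (conj_exp pu))); last first.
      by move=> ab _; rewrite /psi_grad psi_pow //; apply: pdpos.
    rewrite rpow_pos; first by apply: Rgt_not_eq; apply: Rpower_pos.
    apply: (sum_pos (Ordinal Hn1, Ordinal Hd)) => ab; exact: Rpower_pos.
  - move=> c [[i j]|[a b]].
      by exists (dFv j (fun j' => pd Ph (CW i j') p) (fun j' => DEg f x y (CW i j') c p) rw (conj_exp pw) pw); exact: FWd.
    by exists (dFv (a, b) (fun ab : 'I_n1 * 'I_d => pd Ph (CU ab.1 ab.2) p)
         (fun ab => DEg f x y (CU ab.1 ab.2) c p) ru (conj_exp pu) pu); exact: FUd.
move=> p Bp; have Up := HBU p Bp.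
have Hw0 : forall c, 0 <= p c by move=> c; apply: Rlt_le; exact: (proj1 Bp c).
have Hd1 : forall r i c, 0 <= pd (f r (x i)) c p by move=> r i c; case: (Hnn r i p Up) => H _; exact: H.
have Hd2 : forall r i c1 c2, 0 <= pd (pd (f r (x i)) c1) c2 p by move=> r i c1 c2; case: (Hnn r i p Up) => _ H; exact: H.
have gen : forall (I J : finType) (i0 : I) (cI : I -> coord K n1 d) (tau : J -> coord K n1 d)
    (c0 : coord K n1 d) rr PP pp C M,
    1 < pp -> PP = pp / (pp - 1) -> 0 < rr -> 0 <= C -> 0 <= M ->
    (forall t, pd (F c0) (tau t) p =
       dFv i0 (fun i => pd Ph (cI i) p) (fun i => DEg f x y (cI i) (tau t) p) rr PP pp) ->
    (forall i r, \big[Rplus/0]_(t : J) (p (tau t) * pd (f r (x i)) (tau t) p) <= C) ->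
    (forall ii i r, \big[Rplus/0]_(t : J) (p (tau t) * pd (pd (f r (x i)) (cI ii)) (tau t) p)
                 <= M * pd (f r (x i)) (cI ii) p) ->
    \big[Rplus/0]_(t : J) (p (tau t) * Rabs (pd (F c0) (tau t) p)) <=
      2 * ((PP - 1) * (2 * C + M)) * (rr * Rpower (pd Ph (cI i0) p) (PP - 1)
        / Rpower (\big[Rplus/0]_(i : I) Rpower (pd Ph (cI i) p) PP) (/ pp)).
  move=> I J i0 cI tau c0 rr PP pp C M hpp hPP hrr hC hM hform B1 B2.
  rewrite (eq_bigr (fun t => p (tau t) * Rabs (dFv i0 (fun i => pd Ph (cI i) p)
                        (fun i => DEg f x y (cI i) (tau t) p) rr PP pp))); last first.
    by move=> t _; rewrite hform.
  have hL : 0 <= 2 * C + M by lra.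
  apply: (@dF_bound I J i0 (fun i => pd Ph (cI i) p) (fun i t => DEg f x y (cI i) (tau t) p)
            (fun t => p (tau t)) rr PP pp (2 * C + M) hpp hPP hrr hL).
  - move=> i; exact: pdpos.
  - move=> t; exact: Hw0.
  - move=> i; rewrite pdEg //.
    apply: DEg_bound.
    + done.
    + done.
    + done.
    + done.
    + done.
    + move=> t; exact: Hw0.
    + exact: Hd1.
    + exact: Hd2.
    + move=> i1 r; exact: B1.
    + move=> i1 r; exact: B2.
move=> i k j a b.
have FW : forall c, pd (F (CW i j)) c p =
    dFv j (fun j' => pd Ph (CW i j') p) (fun j' => DEg f x y (CW i j') c p) rw (conj_exp pw) pw.
  move=> c; apply: pd_unique; exact: FWd.
have FU : forall c, pd (F (CU a b)) c p =
    dFv (a, b) (fun ab : 'I_n1 * 'I_d => pd Ph (CU ab.1 ab.2) p)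
         (fun ab => DEg f x y (CU ab.1 ab.2) c p) ru (conj_exp pu) pu.
  move=> c; apply: pd_unique; exact: FUd.
have FWv : F (CW i j) p = rw * Rpower (pd Ph (CW i j) p) (conj_exp pw - 1)
    / Rpower (\big[Rplus/0]_(j' : 'I_n1) Rpower (pd Ph (CW i j') p) (conj_exp pw)) (/ pw).
  by rewrite /F GPhi_w //; move=> c; apply: pdpos.
have FUv : F (CU a b) p = ru * Rpower (pd Ph (CU a b) p) (conj_exp pu - 1)
    / Rpower (\big[Rplus/0]_(ab : 'I_n1 * 'I_d) Rpower (pd Ph (CU ab.1 ab.2) p) (conj_exp pu)) (/ pu).
  by rewrite /F GPhi_u //; move=> c; apply: pdpos.
have Aik : A i k = 2 * ((conj_exp pw - 1) * (2 * Cw + Mww)).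
  by rewrite /A /Amat /Adiag /Ablk !ltn_ord.
have AiK : A i K = 2 * ((conj_exp pw - 1) * (2 * Cu + Mwu)).
  by rewrite /A /Amat /Adiag /Ablk ltn_ord ltnn.
have AKk : A K k = 2 * ((conj_exp pu - 1) * (2 * Cw + Muw)).
  by rewrite /A /Amat /Adiag /Ablk ltn_ord ltnn.
have AKK : A K K = 2 * ((conj_exp pu - 1) * (2 * Cu + Muu)).
  by rewrite /A /Amat /Adiag /Ablk ltnn.
have H2' : forall i0 r, \big[Rplus/0]_(ab : 'I_n1 * 'I_d) (p (CU ab.1 ab.2) * pd (f r (x i0)) (CU ab.1 ab.2) p) <= Cu.
  by move=> i0 r; have := H2 i0 p r Bp; rewrite pair_big /=.
have ipu : forall G, ip_u G p = \big[Rplus/0]_(ab : 'I_n1 * 'I_d) (p (CU ab.1 ab.2) * Rabs (pd G (CU ab.1 ab.2) p)).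
  by move=> G; rewrite /ip_u pair_big /=; apply: eq_bigr => ab _; apply: Rmult_comm.
split; [|split; [|split]].
- rewrite /ip_w (eq_bigr (fun t => p (CW k t) * Rabs (pd (F (CW i j)) (CW k t) p))); last first.
    by move=> t _; rewrite Rmult_comm.
  rewrite Aik FWv.
  apply: (gen 'I_n1 'I_n1 j (fun j' => CW i j') (fun t => CW k t) (CW i j) rw (conj_exp pw) pw Cw Mww Hpw erefl Hrw (Rlt_le _ _ HCw) (Rlt_le _ _ HMww)).
  + move=> t; exact: FW.
  + move=> i0 r; exact: H1.
  + move=> ii i0 r; exact: H3.
- rewrite AiK FWv ipu.
  apply: (gen 'I_n1 ('I_n1 * 'I_d)%type j (fun j' => CW i j') (fun ab => CU ab.1 ab.2) (CW i j) rw (conj_exp pw) pw Cu Mwu Hpw erefl Hrw (Rlt_le _ _ HCu) (Rlt_le _ _ HMwu)).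
  + move=> t; exact: FW.
  + exact: H2'.
  + move=> ii i0 r; have := H4 i0 p r i ii Bp; by rewrite pair_big /=.
- rewrite /ip_w (eq_bigr (fun t => p (CW k t) * Rabs (pd (F (CU a b)) (CW k t) p))); last first.
    by move=> t _; rewrite Rmult_comm.
  rewrite AKk FUv.
  apply: (gen ('I_n1 * 'I_d)%type 'I_n1 (a, b) (fun ab => CU ab.1 ab.2) (fun t => CW k t) (CU a b) ru (conj_exp pu) pu Cw Muw Hpu erefl Hru (Rlt_le _ _ HCw) (Rlt_le _ _ HMuw)).
  + move=> t; exact: FU.
  + move=> i0 r; exact: H1.
  + move=> ii i0 r; exact: H5.
- rewrite AKK FUv ipu.
  apply: (gen ('I_n1 * 'I_d)%type ('I_n1 * 'I_d)%type (a, b) (fun ab => CU ab.1 ab.2) (fun ab => CU ab.1 ab.2) (CU a b) ru (conj_exp pu) pu Cu Muu Hpu erefl Hru (Rlt_le _ _ HCu) (Rlt_le _ _ HMuu)).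
  + move=> t; exact: FU.
  + exact: H2'.
  + move=> ii i0 r; have := H6 i0 p r ii.1 ii.2 Bp; by rewrite pair_big /=.
Qed.
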